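(* Let $n\ge2$ and let $\mathcal D$ be the $n$-adic filtration of $[0,1]$. Then every Haar function $h$ on an interval $I\in\mathcal D$ can be written as a sum $h=\sum_k h_k$ of at most $n$ elementary Haar functions $h_k$ on $I$, such that moreover $|h|=\sum_k|h_k|$ pointwise.
   Context: The $n$-adic filtration of $[0,1]$: $\mathcal D_0=\{[0,1]\}$ and each interval of $\mathcal D_k$ is split into $n$ consecutive subintervals of equal length (its children $\mathrm{ch}(I)$), forming $\mathcal D_{k+1}$; $\mathcal D=\bigcup_k\mathcal D_k$. A Haar function on $I\in\mathcal D$ is a function $h$ supported on $I$, constant on each child of $I$, with $\int_I h\,dx=0$. A Haar function on $I$ is elementary if it is nonzero on at most two children of $I$, i.e. it has the form $c(\mathbf 1_{I_{k_1}}-\mathbf 1_{I_{k_2}})$ with $I_{k_1},I_{k_2}\in\mathrm{ch}(I)$ and $c$ a constant. *)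

(* Defs.v *)
From HB Require Import structures.
From mathcomp Require Import all_boot all_order all_algebra.
From mathcomp Require Import all_classical all_reals all_analysis.
Set Implicit Arguments. Unset Strict Implicit. Unset Printing Implicit Defensive.
Import Order.TTheory GRing.Theory Num.Theory.
Local Open Scope classical_set_scope.
Local Open Scope ring_scope.

Definition dint {R : realType} (n k j : nat) : set R :=
  `[ (j%:R / (n%:R ^+ k)), (j.+1%:R / (n%:R ^+ k)) [.

Definition child {R : realType} (n k j i : nat) : set R := @dint R n k.+1 (n * j + i).

Definition is_haar {R : realType} (n k j : nat) (h : R -> R) : Prop :=
  [/\ (forall x, ~ dint n k j x -> h x = 0),
      (forall i, (i < n)%N -> exists c : R, forall x, child n k j i x -> h x = c)
    & (\int[lebesgue_measure]_(x in (dint n k j : set R)) (h x)%:E = 0)%E ].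

Definition is_elem_haar {R : realType} (n k j : nat) (h : R -> R) : Prop :=
  exists (c : R) (i1 i2 : nat), [/\ (i1 < n)%N, (i2 < n)%N &
    h = (fun x => c * (\1_(child n k j i1) x - \1_(child n k j i2) x))].

(* Main.v *)
Require Import Defs.
From HB Require Import structures.
From mathcomp Require Import all_boot all_order all_algebra.
From mathcomp Require Import all_classical all_reals all_analysis.
From mathcomp Require Import lra zify.
From Stdlib Require Import Lia.
Import Order.TTheory GRing.Theory Num.Theory.
Local Open Scope classical_set_scope.
Local Open Scope ring_scope.

Section Comb.
Variable R : realType.
Variable n : nat.

Definition nzset (c : nat -> R) : {set 'I_n} := [set i : 'I_n | c i != 0]%SET.

Lemma sum_ind_eq (p : nat) : (p < n)%N -> \sum_(i < n) ((p == i)%:R : R) = 1.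
Proof.
move=> hp; rewrite (bigD1 (Ordinal hp)) //= eqxx big1 ?addr0 // => i hi.
by case: eqP => // e; move: hi; rewrite -val_eqE /= e eqxx.
Qed.

Lemma comb (N : nat) (c : nat -> R) : (#|nzset c| <= N)%N ->
  \sum_(i < n) c i = 0 ->
  exists s : seq (R * nat * nat),
    [/\ (size s <= #|nzset c|)%N,
        (forall t, t \in s -> [/\ 0 <= t.1.1, (t.1.2 < n)%N, (t.2 < n)%N & t.1.2 != t.2]),
        (forall i, (i < n)%N -> c i = \sum_(t <- s) t.1.1 * ((t.1.2 == i)%:R - (t.2 == i)%:R))
      & (forall i, (i < n)%N -> `|c i| = \sum_(t <- s) t.1.1 * ((t.1.2 == i)%:R + (t.2 == i)%:R))].
Proof.
elim: N c => [|N IH] c hN hsum.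
  have c0 : forall i, (i < n)%N -> c i = 0.
    move=> i hi; apply/eqP; apply/negPn/negP => hc.
    have : (Ordinal hi) \in nzset c by rewrite inE.
    by move: hN; rewrite leqn0 => /eqP/cards0_eq ->; rewrite inE.
  exists [::]; split => //= i hi; rewrite big_nil ?c0 ?normr0 //.
have [c0|[i0 hi0 ci0]] : (forall i, (i < n)%N -> c i = 0) \/
    exists2 i, (i < n)%N & c i != 0.
  case: (boolP [forall i : 'I_n, c i == 0]) => [/forallP H|/forallPn H].
    by left => i hi; apply/eqP; exact: (H (Ordinal hi)).
  right; move: H => [i hi]; exact: (ex_intro2 _ _ (val i) (ltn_ord i) hi).
  exists [::]; split => //= i hi; rewrite big_nil ?c0 ?normr0 //.
have [p hp cp] : exists2 p, (p < n)%N & 0 < c p.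
  case: (pselect (exists2 p, (p < n)%N & 0 < c p)) => // H.
  have H' : forall i : 'I_n, true -> 0 <= - c i.
    move=> i _; rewrite oppr_ge0 leNgt; apply/negP => hc; apply: H.
    exact: (ex_intro2 _ _ (val i) (ltn_ord i) hc).
  have := @psumr_eq0P _ _ _ _ H'; rewrite sumrN hsum oppr0 => /(_ erefl (Ordinal hi0) erefl).
  by move/eqP; rewrite oppr_eq0 (negbTE ci0).
have [q hq cq] : exists2 q, (q < n)%N & c q < 0.
  case: (pselect (exists2 p, (p < n)%N & c p < 0)) => // H.
  have H' : forall i : 'I_n, true -> 0 <= c i.
    move=> i _; rewrite leNgt; apply/negP => hc; apply: H.
    exact: (ex_intro2 _ _ (val i) (ltn_ord i) hc).
  have := @psumr_eq0P _ _ _ _ H' hsum (Ordinal hi0) erefl.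
  by move/eqP; rewrite (negbTE ci0).
have [m [m0 mp mq meq]] : exists m, [/\ 0 < m, m <= c p, m <= - c q & (m = c p \/ m = - c q)].
  have [h1|h1] := ltP (c p) (- c q).
    by exists (c p); split => //; [lra|left].
  by exists (- c q); split => //; [lra|right].
have pq : p != q by apply/eqP => e; move: cp cq; rewrite e; lra.
pose c' i := c i - m * ((p == i)%:R - (q == i)%:R).
have c'E : forall i, i != p -> i != q -> c' i = c i.
  by move=> i ip iq; rewrite /c' eq_sym (negbTE ip) eq_sym (negbTE iq) subrr mulr0 subr0.
have c'p : c' p = c p - m by rewrite /c' eqxx eq_sym (negbTE pq) subr0 mulr1.
have c'q : c' q = c q + m by rewrite /c' eqxx (negbTE pq) sub0r mulrN1 opprK.
have c'def : forall i, c' i = c i - m * ((p == i)%:R - (q == i)%:R) by [].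
clearbody c'.
have hsum' : \sum_(i < n) c' i = 0.
  under eq_bigr do rewrite c'def.
  rewrite sumrB -mulr_sumr sumrB !sum_ind_eq // subrr mulr0 subr0 //.
have hsub : nzset c' \proper nzset c.
  apply/properP; split.
    apply/fintype.subsetP => i; rewrite !inE.
    case: (eqVneq (val i) p) => [->|ip]; first by rewrite (gt_eqF cp).
    case: (eqVneq (val i) q) => [->|iq]; first by rewrite (lt_eqF cq).
    by rewrite c'E.
  case: meq => e.
    by exists (Ordinal hp); rewrite !inE /= ?(gt_eqF cp) ?c'p ?e ?subrr // ?eqxx.
  by exists (Ordinal hq); rewrite !inE /= ?(lt_eqF cq) ?c'q ?e ?addrN // ?eqxx.
have hcard := proper_card hsub.
have hN' : (#|nzset c'| <= N)%N by rewrite -ltnS; exact: leq_trans hcard hN.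
have [s' [hs1 hs2 hs3 hs4]] := IH c' hN' hsum'.
exists ((m, p, q) :: s'); split.
- by rewrite /= (leq_ltn_trans hs1 hcard).
- move=> t; rewrite inE => /orP[/eqP ->|/hs2 //]; split => //=; exact: ltW.
- move=> i hi; rewrite big_cons -hs3 // c'def /=; lra.
- move=> i hi; rewrite big_cons -hs4 //.
  case: (eqVneq i p) => [->|ip].
    have -> : ((m,p,q).2 == p) = false by rewrite /= eq_sym (negbTE pq).
    rewrite /= mulr1n mulr0n c'p (gtr0_norm cp) ger0_norm; lra.
  case: (eqVneq i q) => [->|iq].
    rewrite /= mulr1n mulr0n c'q (ltr0_norm cq) ler0_norm; lra.
  by rewrite c'E // /= mulr0n addr0 mulr0 add0r.
Qed.
End Comb.

Section Geo.
Variable R : realType.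
Variable n : nat.
Hypothesis n0 : (0 < n)%N.

Lemma npos k : 0 < (n%:R : R) ^+ k.
Proof. by rewrite exprn_gt0 // ltr0n. Qed.

Lemma mem_dint k j (x : R) : dint n k j x <-> (j%:R <= x * n%:R ^+ k < j.+1%:R).
Proof.
rewrite /dint /= in_itv /= ler_pdivrMr ?ltr_pdivlMr ?npos //.
Qed.

Lemma mem_child k j i (x : R) : child n k j i x <->
  ((n * j + i)%:R <= (x * n%:R ^+ k) * n%:R < (n * j + i).+1%:R).
Proof. by rewrite /child mem_dint exprSr mulrA. Qed.

Lemma child_sub k j i (x : R) : (i < n)%N -> child n k j i x -> dint n k j x.
Proof.
move=> hi /mem_child; rewrite mem_dint.
set y := x * _.
have hn : 0 < (n%:R : R) by rewrite ltr0n.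
have hin : (i%:R : R) + 1 <= n%:R by rewrite natr1 ler_nat.
rewrite -[(n * j + i).+1]addn1 !natrD !natrM => /andP[h1 h2].
apply/andP; split.
  rewrite -(ler_pM2r hn) mulrC; apply: le_trans h1; rewrite lerDl //.
rewrite -(ltr_pM2r hn); apply: (lt_le_trans h2).
rewrite -[j.+1%:R]natr1 mulrDl mul1r [_ * n%:R]mulrC -addrA lerD2l //.
Qed.

Lemma eq_of_between (a b : nat) (z : R) : a%:R <= z < a.+1%:R -> b%:R <= z < b.+1%:R -> a = b.
Proof.
move=> /andP[a1 a2] /andP[b1 b2].
have : (a < b.+1)%N by rewrite -(ltr_nat R); exact: le_lt_trans a1 b2.
have : (b < a.+1)%N by rewrite -(ltr_nat R); exact: le_lt_trans b1 a2.
lia.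
Qed.

Lemma child_uniq k j i i' (x : R) : child n k j i x -> child n k j i' x -> i = i'.
Proof.
move=> /mem_child h1 /mem_child h2; have := eq_of_between _ _ _ h1 h2; lia.
Qed.

Lemma child_ex k j (x : R) : dint n k j x -> exists2 i, (i < n)%N & child n k j i x.
Proof.
rewrite mem_dint; set y := x * _ => /andP[h1 h2].
have hn : 0 < (n%:R : R) by rewrite ltr0n.
have hj0 : (0 : R) <= j%:R by [].
have y0 : 0 <= y * n%:R by rewrite mulr_ge0 // ?(le_trans hj0 h1) // ltW.
set t := Num.Def.trunc (y * n%:R).
have ht1 : (n * j <= t)%N by rewrite truncn_ge_nat // natrM mulrC ler_pM2r.
have [t1 t2] := andP (truncn_itv y0).
have ht2 : (t < n * j + n)%N.
  rewrite -(ltr_nat R) natrD natrM; apply: le_lt_trans t1 _.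
  apply: (lt_le_trans (_ : y * n%:R < j.+1%:R * n%:R)); first by rewrite ltr_pM2r.
  by rewrite -natr1 mulrDl mul1r mulrC.
exists (t - n * j)%N; first lia.
apply/mem_child; rewrite subnKC //; exact/andP.
Qed.
End Geo.
Arguments child_uniq {R n} n0 {k j i i' x}.
Arguments child_sub {R n} n0 {k j i x}.
Arguments child_ex {R n} n0 {k j x}.
Arguments mem_dint {R n} n0 {k j x}.
Arguments mem_child {R n} n0 {k j i x}.

Lemma ind_child (R : realType) n (n0 : (0 < n)%N) k j i0 p (x : R) : child n k j i0 x ->
  \1_(child n k j p) x = ((p == i0)%:R : R).
Proof.
move=> hx; rewrite indicE; case: (eqVneq p i0) => [->|ne].
  by rewrite mem_set.
rewrite memNset // => hp; move/eqP: ne; apply. exact: (@child_uniq R n n0 k j p i0 x hp hx).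
Qed.

Theorem lemma6p4 (R : realType) (n k j : nat) (h : R -> R) :
  (2 <= n)%N -> (j < n ^ k)%N -> is_haar n k j h ->
  exists hs : seq (R -> R),
    [/\ (size hs <= n)%N,
        (forall g, g \in hs -> is_elem_haar n k j g),
        (forall x, h x = \sum_(g <- hs) g x)
      & (forall x, `|h x| = \sum_(g <- hs) `|g x|)].
Proof.
move=> n2 hj [h0 hc hint].
have n0 : (0 < n)%N by apply: leq_trans n2.
pose M : R := n%:R ^+ k.+1.
have M0 : 0 < M by exact: npos.
pose c i := h ((n * j + i)%:R / M).
have hcE : forall i x, (i < n)%N -> child n k j i x -> h x = c i.
  move=> i x hi hx; have [c0 Hc] := hc i hi.
  rewrite (Hc x hx) /c Hc // /child (mem_dint n0) mulfVK ?gt_eqF //.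
  by rewrite lexx ltr_nat ltnSn.
have hrep : forall x, h x = \sum_(i < n) c i * \1_(child n k j i) x.
  move=> x; case: (pselect (dint n k j x)) => hx.
    have [i0 hi0 hxi] := child_ex n0 hx.
    rewrite (bigD1 (Ordinal hi0)) //= big1 ?addr0.
      by rewrite indicE mem_set // mulr1 (hcE i0).
    move=> i hi; rewrite indicE memNset ?mulr0 // => hxi'.
    by move: hi; rewrite -val_eqE /= (child_uniq n0 hxi' hxi) eqxx.
  rewrite h0 // big1 // => i _; rewrite indicE memNset ?mulr0 // => hxi.
  exact: hx (child_sub n0 (ltn_ord i) hxi).
have mD : measurable (dint n k j : set R) by exact: measurable_itv.
have mC : forall i, measurable (child n k j i : set R).
  by move=> i; exact: measurable_itv.
have hI1 : forall i, lebesgue_measure.-integrable (dint n k j : set R)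
    (fun x => (\1_(child n k j i) x)%:E).
  move=> i; refine (integrableS _ _ _ (integrable_indic_itv _ _ true true)) => //.
have hI : forall i : 'I_n, (\int[lebesgue_measure]_(x in (dint n k j : set R))
    (c i * \1_(child n k j i) x)%:E = (c i / M)%:E)%E.
  move=> i; under eq_integral do rewrite EFinM.
  rewrite (integralZl _ (hI1 i)); last exact: measurable_itv.
  rewrite integral_indic; [|exact: measurable_itv|exact: measurable_itv].
  rewrite setIidl; last by move=> x; exact: (child_sub n0 (ltn_ord i)).
  rewrite /child /dint.
  set a := ((n * j + i)%:R / n%:R ^+ k.+1)%R.
  set b := ((n * j + i).+1%:R / n%:R ^+ k.+1)%R.
  transitivity ((c i)%:E * (@lebesgue_measure R [set` Interval (BLeft a) (BLeft b)]))%E; first by [].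
  rewrite lebesgue_measure_itv /=.
  have ab : a < b by rewrite /a /b ltr_pM2r ?invr_gt0 // ltr_nat.
  rewrite lte_fin ab -EFinD -EFinM; congr (_%:E).
  by rewrite /a /b -mulrBl -[(n * j + i).+1%:R]natr1 addrAC subrr add0r mul1r.
have hsum : \sum_(i < n) c i = 0.
  have hint' : (\int[lebesgue_measure]_(x in (dint n k j : set R))
      (\sum_(i < n) (c i * \1_(child n k j i) x)%:E) = 0)%E.
    rewrite -[X in _ = X]hint; apply: eq_integral => x _; by rewrite (hrep x) -sumEFin.
  rewrite integral_sum in hint'; last first.
    move=> i; under eq_fun do rewrite EFinM.
    apply: integrableZl; first exact: measurable_itv.
    refine (integrableS _ _ _ (integrable_indic_itv _ _ true true)) => //.
    exact: measurable_itv.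
  rewrite (eq_bigr _ (fun i _ => hI i)) sumEFin in hint'.
  have := @EFin_inj R _ 0%R hint'; rewrite -mulr_suml => /eqP.
  by rewrite mulf_eq0 invr_eq0 (gt_eqF M0) orbF => /eqP.
have [s [hs1 hs2 hs3 hs4]] :=
  @comb R n n c (leq_trans (max_card _) (eq_leq (card_ord n))) hsum.
have nx : forall x : R, ~ dint n k j x -> forall p, (p < n)%N -> \1_(child n k j p) x = 0 :> R.
  move=> x hx p hp; rewrite indicE memNset // => hc'; apply: hx.
  exact: (child_sub n0 hp hc').
exists [seq (fun x => t.1.1 * (\1_(child n k j t.1.2) x - \1_(child n k j t.2) x)) | t <- s].
split.
- by rewrite size_map (leq_trans hs1) // (leq_trans (max_card _)) // card_ord.
- move=> g /mapP [t ht ->]; have [_ h1 h2 _] := hs2 t ht.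
  by exists t.1.1, t.1.2, t.2; split.
- move=> x; rewrite big_map; case: (pselect (dint n k j x)) => hx.
    have [i0 hi0 hxi] := child_ex n0 hx.
    rewrite (hcE i0 x hi0 hxi) (hs3 i0 hi0); apply: eq_bigr => t _.
    by rewrite !(@ind_child R n n0 k j i0 _ x hxi).
  rewrite h0 // big1_seq // => t /andP[_ ht]; have [_ h1 h2 _] := hs2 t ht.
  by rewrite !nx // subrr mulr0.
- move=> x; rewrite big_map; case: (pselect (dint n k j x)) => hx.
    have [i0 hi0 hxi] := child_ex n0 hx.
    rewrite (hcE i0 x hi0 hxi) (hs4 i0 hi0); apply: eq_big_seq => t ht.
    have [h1 h2 h3 h4] := hs2 t ht.
    rewrite !(@ind_child R n n0 k j i0 _ x hxi) normrM (ger0_norm h1); congr (_ * _).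
    case: (eqVneq t.1.2 i0) => [e1|n1]; case: (eqVneq t.2 i0) => [e2|n2'].
    + by move: h4; rewrite e1 e2 eqxx.
    + by rewrite subr0 normr1 addr0.
    + by rewrite sub0r normrN normr1 add0r.
    + by rewrite subrr normr0 addr0.
  rewrite h0 ?normr0 // big1_seq // => t /andP[_ ht]; have [_ h1 h2 _] := hs2 t ht.
  by rewrite !nx // subrr mulr0 normr0.
Qed.
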